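(* Let $R$ be a monad on $\mathrm{Sets}$ and $LM$ a left $R$-module with values in $\mathrm{Sets}$. The pre-category $CC(R,LM)$, equipped with the length function, the object $pt$, the map $ft$, the morphisms $p_X$, and the objects $f^*X$ and morphisms $q(f,X)$ described below, is a C-system.
   Context: Notation: $[n]=\{1,\dots,n\}$, $[0]=\emptyset$. A monad $R$ on Sets is given by sets $R(X)$, maps $\eta_X:X\to R(X)$ and, for $f:X\to R(Y)$, maps $\mathrm{bind}(f):R(X)\to R(Y)$ with $\mathrm{bind}(\eta_X)=\mathrm{id}$, $\mathrm{bind}(f)\circ\eta_X=f$, $\mathrm{bind}(\mathrm{bind}(g)\circ f)=\mathrm{bind}(g)\circ\mathrm{bind}(f)$. A left $R$-module $LM$ with values in Sets is a functor $LM:\mathrm{Sets}\to\mathrm{Sets}$ with maps $\rho(f):LM(X)\to LM(Y)$ for $f:X\to R(Y)$ such that $\rho(\eta_X)=\mathrm{id}$ and $\rho(g)\circ\rho(f)=\rho(\mathrm{bind}(g)\circ f)$. Elements $y$ of a set $Y$ are regarded as elements of $R(Y)$ via $\eta_Y$. For $E\in LM([m])$ (resp. $E\in R([m])$) and $f_1,\dots,f_m\in R(Y)$ write $E(f_1/1,\dots,f_m/m)$ for $\rho(f)(E)$ (resp. $\mathrm{bind}(f)(E)$), where $f(i)=f_i$. The pre-category $CC(R,LM)$: its set of objects is $\coprod_{n\ge0}Ob_n$ with $Ob_n=LM([0])\times LM([1])\times\dots\times LM([n-1])$; we write objects as sequences $(T_1,\dots,T_n)$ with $T_i\in LM([i-1])$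 and set $l(T_1,\dots,T_n)=n$. The set of morphisms from $(E_1,\dots,E_m)$ to $(T_1,\dots,T_n)$ is $R([m])^n$ (morphism sets for different pairs of objects are disjoint). The composite of $f=(f_1,\dots,f_n):(E_1,\dots,E_m)\to(T_1,\dots,T_n)$ and $g=(g_1,\dots,g_k):(T_1,\dots,T_n)\to(U_1,\dots,U_k)$ is $g\circ f=(g_1(f_1/1,\dots,f_n/n),\dots,g_k(f_1/1,\dots,f_n/n))$; the identity of an object of length $n$ is $(1,\dots,n)$. Structure: $pt$ is the empty sequence; $ft(T_1,\dots,T_n)=(T_1,\dots,T_{n-1})$ for $n\ge1$, $ft(pt)=pt$; $p_X=(1,\dots,n):(T_1,\dots,T_{n+1})\to(T_1,\dots,T_n)$ for $X=(T_1,\dots,T_{n+1})$ and $p_{pt}=\mathrm{id}$; for $X=(T_1,\dots,T_{n+1})$ and $f=(f_1,\dots,f_n):(R_1,\dots,R_m)\to(T_1,\dots,T_n)$, $f^*X=(R_1,\dots,R_m,T_{n+1}(f_1/1,\dots,f_n/n))$ and $q(f,X)=(f_1,\dots,f_n,m+1):f^*X\to X$. A C-system is a category $CC$ together with a function $l:Ob(CC)\to\mathbb{N}$, an object $pt$, a map $ft:Ob(CC)\to Ob(CC)$, morphisms $p_X:X\to ft(X)$ for all $X$, and, for every $X$ with $l(X)>0$ and every morphism $f:Y\to ft(X)$, an object $f^*X$ and a morphism $q(f,X):f^*X\to X$, such that: $l^{-1}(0)=\{pt\}$; $l(ft(X))=l(X)-1$ if $l(X)>0$ and $ft(pt)=pt$;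 $pt$ is a final object; $l(f^*X)>0$, $ft(f^*X)=Y$, and $p_X\circ q(f,X)=f\circ p_{f^*X}$ with this commutative square a pullback square; $\mathrm{id}_{ft(X)}^*X=X$ and $q(\mathrm{id}_{ft(X)},X)=\mathrm{id}_X$; and for $g:Z\to Y$, $f:Y\to ft(X)$: $(f\circ g)^*X=g^*(f^*X)$ and $q(f\circ g,X)=q(f,X)\circ q(g,f^*X)$. *)

(* Defs.v *)
From mathcomp Require Import all_boot.

Set Implicit Arguments.
Unset Strict Implicit.
Unset Printing Implicit Defensive.

(* Monads on Sets (Sets = Type), in Kleisli form.                        *)
Record monad := Monad {
  mon :> Type -> Type;
  eta : forall X : Type, X -> mon X;
  bind : forall X Y : Type, (X -> mon Y) -> mon X -> mon Y;
  bind_eta : forall (X : Type) (x : mon X), bind (@eta X) x = x;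
  bind_etaK : forall (X Y : Type) (f : X -> mon Y) (x : X), bind f (eta x) = f x;
  bind_bind : forall (X Y Z : Type) (f : X -> mon Y) (g : Y -> mon Z) (x : mon X),
      bind (fun y => bind g (f y)) x = bind g (bind f x)
}.
Arguments eta {m X}.
Arguments bind {m X Y}.

Record lmodule (R : monad) := LModule {
  lmod :> Type -> Type;
  lmap : forall X Y : Type, (X -> Y) -> lmod X -> lmod Y;
  lmap_id : forall (X : Type) (x : lmod X), lmap (fun y => y) x = x;
  lmap_comp : forall (X Y Z : Type) (f : X -> Y) (g : Y -> Z) (x : lmod X),
      lmap g (lmap f x) = lmap (fun y => g (f y)) x;
  rho : forall X Y : Type, (X -> R Y) -> lmod X -> lmod Y;
  rho_eta : forall (X : Type) (x : lmod X), rho (@eta R X) x = x;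
  rho_rho : forall (X Y Z : Type) (f : X -> R Y) (g : Y -> R Z) (x : lmod X),
      rho g (rho f x) = rho (fun y => bind g (f y)) x
}.
Arguments rho {R l X Y}.
Arguments lmap {R l X Y}.

(* C-systems.  The category is given in "essentially algebraic" form:   *)
(* a type of objects, a type of morphisms (so morphism sets for distinct *)
(* pairs of objects are disjoint), dom/cod, identities and a total       *)
(* composition comp g f (= g o f) that is only meaningful when           *)
(* cod f = dom g.  f^*X and q(f,X) are given as total operations, only   *)
(* constrained when l X > 0 and cod f = ft X.                             *)
Record is_Csystem (Ob Mor : Type) (dom cod : Mor -> Ob) (idm : Ob -> Mor)
    (comp : Mor -> Mor -> Mor) (l : Ob -> nat) (pt : Ob) (ft : Ob -> Ob)
    (p : Ob -> Mor) (fstar : Mor -> Ob -> Ob) (q : Mor -> Ob -> Mor) : Prop := {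
  cs_dom_id : forall X, dom (idm X) = X;
  cs_cod_id : forall X, cod (idm X) = X;
  cs_dom_comp : forall f g, cod f = dom g -> dom (comp g f) = dom f;
  cs_cod_comp : forall f g, cod f = dom g -> cod (comp g f) = cod g;
  cs_id_left : forall f, comp (idm (cod f)) f = f;
  cs_id_right : forall f, comp f (idm (dom f)) = f;
  cs_assoc : forall f g h, cod f = dom g -> cod g = dom h ->
      comp h (comp g f) = comp (comp h g) f;
  cs_l0 : forall X, l X = 0 <-> X = pt;
  cs_l_ft : forall X, 0 < l X -> l (ft X) = (l X).-1;
  cs_ft_pt : ft pt = pt;
  cs_final : forall X, exists! f, dom f = X /\ cod f = pt;
  cs_dom_p : forall X, dom (p X) = X;
  cs_cod_p : forall X, cod (p X) = ft X;
  cs_l_fstar : forall X f, 0 < l X -> cod f = ft X -> 0 < l (fstar f X);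
  cs_ft_fstar : forall X f, 0 < l X -> cod f = ft X -> ft (fstar f X) = dom f;
  cs_dom_q : forall X f, 0 < l X -> cod f = ft X -> dom (q f X) = fstar f X;
  cs_cod_q : forall X f, 0 < l X -> cod f = ft X -> cod (q f X) = X;
  cs_square : forall X f, 0 < l X -> cod f = ft X ->
      comp (p X) (q f X) = comp f (p (fstar f X));
  cs_pullback : forall X f, 0 < l X -> cod f = ft X ->
      forall u v, dom u = dom v -> cod u = X -> cod v = dom f ->
        comp (p X) u = comp f v ->
        exists! h, [/\ dom h = dom u, cod h = fstar f X,
                       comp (q f X) h = u & comp (p (fstar f X)) h = v];
  cs_fstar_id : forall X, 0 < l X -> fstar (idm (ft X)) X = X;
  cs_q_id : forall X, 0 < l X -> q (idm (ft X)) X = idm X;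
  cs_fstar_comp : forall X f g, 0 < l X -> cod f = ft X -> cod g = dom f ->
      fstar (comp f g) X = fstar g (fstar f X);
  cs_q_comp : forall X f g, 0 < l X -> cod f = ft X -> cod g = dom f ->
      q (comp f g) X = comp (q f X) (q g (fstar f X))
}.

(* The pre-category CC(R, LM).  [n] is represented by 'I_n = {0..n-1}   *)
(* (index i of the paper is the ordinal i-1).                            *)
Section CC.
Variable R : monad.
Variable LM : lmodule R.

(* Ob_ n = LM([0]) x LM([1]) x ... x LM([n-1]), built as snoc-lists.   *)
Inductive Ob_ : nat -> Type :=
| onil : Ob_ 0
| ocons : forall n, Ob_ n -> LM 'I_n -> Ob_ n.+1.

Definition CCOb : Type := {n : nat & Ob_ n}.

Definition CCl (X : CCOb) : nat := projT1 X.

Definition CCpt : CCOb := existT _ 0 onil.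

Definition CCft (X : CCOb) : CCOb :=
  match projT2 X with
  | onil => CCpt
  | ocons n X' _ => existT _ n X'
  end.

(* A morphism (E_1..E_m) -> (T_1..T_n) is an element of R([m])^n. *)
Record CCMor : Type := MkMor {
  mdom : CCOb;
  mcod : CCOb;
  marr : 'I_(CCl mcod) -> R 'I_(CCl mdom)
}.
Arguments marr : clear implicits.

Definition CCid (X : CCOb) : CCMor := @MkMor X X (fun i => eta i).

(* g o f = (g_1(f_1/1,..,f_n/n), ..., g_k(f_1/1,..,f_n/n)); junk (= f)  *)
(* when the lengths do not match (never the case for composable pairs). *)
Definition CCcomp (g f : CCMor) : CCMor :=
  match CCl (mdom g) =P CCl (mcod f) with
  | ReflectT e => @MkMor (mdom f) (mcod g)
                    (fun i => bind (fun j => marr f (cast_ord e j)) (marr g i))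
  | ReflectF _ => f
  end.

Definition incl (n : nat) : 'I_n -> 'I_n.+1 := widen_ord (leqnSn n).

(* p_X = (1,..,n) : (T_1..T_{n+1}) -> (T_1..T_n);  p_pt = id. *)
Definition CCp (X : CCOb) : CCMor :=
  match X with
  | existT n Xn =>
    match Xn in Ob_ k return CCMor with
    | onil => CCid CCpt
    | ocons n X' T =>
        @MkMor (existT _ n.+1 (ocons X' T)) (existT _ n X')
               (fun i => eta (incl i))
    end
  end.

(* f^*X = (R_1..R_m, T_{n+1}(f_1/1,..,f_n/n)) for X = (T_1..T_{n+1}). *)
Definition CCfstar (f : CCMor) (X : CCOb) : CCOb :=
  match X with
  | existT _ Xn =>
    match Xn in Ob_ k return CCOb with
    | onil => mdom f
    | ocons n X' T =>
        match CCl (mcod f) =P n with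
        | ReflectT e =>
            existT _ (CCl (mdom f)).+1
              (ocons (projT2 (mdom f))
                     (rho (fun j : 'I_n => marr f (cast_ord (esym e) j)) T))
        | ReflectF _ => mdom f
        end
    end
  end.

(* q(f,X) = (f_1,..,f_n, m+1) : f^*X -> X, where f_i in R([m]) is       *)
(* regarded in R([m+1]) via the inclusion [m] -> [m+1].                  *)
Definition CCq (f : CCMor) (X : CCOb) : CCMor :=
  match X with
  | existT _ Xn =>
    match Xn in Ob_ k return CCMor with
    | onil => CCid (mdom f)
    | ocons n X' T =>
        match CCl (mcod f) =P n with
        | ReflectT e =>
            @MkMor
              (existT _ (CCl (mdom f)).+1
                 (ocons (projT2 (mdom f))
                        (rho (fun j : 'I_n => marr f (cast_ord (esym e) j)) T)))
              (existT _ n.+1 (ocons X' T))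
              (fun i : 'I_n.+1 =>
                 match unlift ord_max i with
                 | Some j => bind (fun k => eta (incl k))
                                  (marr f (cast_ord (esym e) j))
                 | None => eta ord_max
                 end)
        | ReflectF _ => CCid (mdom f)
        end
    end
  end.

End CC.

(* Main.v *)
Require Import Defs.
From mathcomp Require Import all_boot.
From Stdlib Require Import FunctionalExtensionality Eqdep.
Set Implicit Arguments. Unset Strict Implicit.

Section P.
Variable R : monad.
Variable LM : lmodule R.
Notation Ob := (CCOb LM).
Notation Mor := (CCMor LM).

Lemma mor_ext (d c : Ob) (a b : 'I_(CCl c) -> R 'I_(CCl d)) :
  (forall i, a i = b i) -> MkMor a = MkMor b.
Proof. by move=> H; rewrite (functional_extensionality _ _ H). Qed.

Lemma marr_inj (d c : Ob) (a b : 'I_(CCl c) -> R 'I_(CCl d)) :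
  MkMor a = MkMor b -> forall i, a i = b i.
Proof.
move=> H.
have := f_equal (fun m : Mor => existT (fun p : Ob * Ob => 'I_(CCl p.2) -> R 'I_(CCl p.1)) (mdom m, mcod m) (@marr _ _ m)) H.
move=> H2; have /= E := inj_pair2 _ _ _ _ _ H2; by rewrite E.
Qed.

Lemma cast_irr n (e : n = n) (i : 'I_n) : cast_ord e i = i.
Proof. by apply: val_inj. Qed.

Lemma comp_eq (d c c' : Ob) (a : 'I_(CCl c) -> R 'I_(CCl d)) (b : 'I_(CCl c') -> R 'I_(CCl c)) :
  CCcomp (MkMor b) (MkMor a) = MkMor (fun i => bind (fun j => a j) (b i)).
Proof.
rewrite /CCcomp /=; case: eqP => // e.
by apply: mor_ext => i; congr bind; apply: functional_extensionality => j; rewrite cast_irr.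
Qed.

Lemma l0 (X : Ob) : CCl X = 0 <-> X = CCpt LM.
Proof.
split; last by move=> ->.
case: X => n Xn /= H; subst n.
move: Xn. suff: forall k (Y : Ob_ LM k) (e : k = 0), existT _ k Y = CCpt LM.
  by move=> H Xn; apply: (H 0 Xn erefl).
by move=> k Y; case: Y.
Qed.

Lemma lpos (X : Ob) : 0 < CCl X -> exists n (X' : Ob_ LM n) T, X = existT _ n.+1 (ocons X' T).
Proof. by case: X => n Xn; case: Xn => // m X' T _; exists m, X', T. Qed.


Lemma fstar_eq n (X' : Ob_ LM n) T (d : Ob) (a : 'I_n -> R 'I_(CCl d)) :
  CCfstar (@MkMor _ _ d (existT _ n X') a) (existT _ n.+1 (ocons X' T))
  = existT _ (CCl d).+1 (ocons (projT2 d) (rho a T)).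
Proof.
rewrite /CCfstar /=; case: eqP => // e.
by congr existT; congr ocons; congr rho; apply: functional_extensionality => j; rewrite cast_irr.
Qed.

Definition qarr n (d : Ob) (a : 'I_n -> R 'I_(CCl d)) (i : 'I_n.+1) : R 'I_(CCl d).+1 :=
  match unlift ord_max i with
  | Some j => bind (fun k => eta (incl k)) (a j)
  | None => eta ord_max
  end.

Lemma q_eq n (X' : Ob_ LM n) T (d : Ob) (a : 'I_n -> R 'I_(CCl d)) :
  CCq (@MkMor _ _ d (existT _ n X') a) (existT _ n.+1 (ocons X' T))
  = @MkMor _ _ (existT _ (CCl d).+1 (ocons (projT2 d) (rho a T))) (existT _ n.+1 (ocons X' T)) (qarr a).
Proof.
rewrite /CCq /=; case: eqP => // e.
have -> : (fun j : 'I_n => a (cast_ord (esym e) j)) = a.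
  by apply: functional_extensionality => j; rewrite cast_irr.
apply: mor_ext => i; rewrite /qarr; case: unliftP => //= j _.
by rewrite cast_irr.
Qed.

Lemma ob_eta (d : Ob) : existT _ (CCl d) (projT2 d) = d.
Proof. by case: d. Qed.

Lemma incl_lift n (j : 'I_n) : incl j = lift ord_max j.
Proof. by apply: val_inj; rewrite /= /bump leqNgt ltn_ord. Qed.

Lemma unlift_incl n (j : 'I_n) : unlift ord_max (incl j) = Some j.
Proof. by rewrite incl_lift liftK. Qed.


Definition ord0E T (i : 'I_0) : T := False_rect T (match i with Ordinal _ h => ltac:(by rewrite ltn0 in h) end).

Lemma final (X : Ob) : exists! f : Mor, mdom f = X /\ mcod f = CCpt LM.
Proof.
exists (@MkMor _ _ X (CCpt LM) (fun i => ord0E _ i)); split => //.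
case=> d c a /= [E1 E2]; subst d c; apply: mor_ext => i; exfalso; move: (ltn_ord i); by rewrite ltn0.
Qed.

Lemma dom_comp (f g : Mor) : mcod f = mdom g -> mdom (CCcomp g f) = mdom f.
Proof. by case: f => d c a; case: g => d' c' b /= E; subst d'; rewrite comp_eq. Qed.

Lemma cod_comp (f g : Mor) : mcod f = mdom g -> mcod (CCcomp g f) = mcod g.
Proof. by case: f => d c a; case: g => d' c' b /= E; subst d'; rewrite comp_eq. Qed.

Lemma id_left (f : Mor) : CCcomp (CCid (mcod f)) f = f.
Proof. by case: f => d c a; rewrite /CCid comp_eq; apply: mor_ext => i; rewrite bind_etaK. Qed.

Lemma id_right (f : Mor) : CCcomp f (CCid (mdom f)) = f.
Proof.
case: f => d c a; rewrite /CCid comp_eq; apply: mor_ext => i.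
by rewrite -{2}(bind_eta (a i)).
Qed.

Lemma assoc (f g h : Mor) : mcod f = mdom g -> mcod g = mdom h ->
  CCcomp h (CCcomp g f) = CCcomp (CCcomp h g) f.
Proof.
case: f => d c a; case: g => d' c' b; case: h => d'' c'' e /= E1 E2; subst d' d''.
rewrite !comp_eq; apply: mor_ext => i; by rewrite -bind_bind.
Qed.


Lemma p_cons n (X' : Ob_ LM n) T :
  CCp (existT _ n.+1 (ocons X' T)) = @MkMor _ _ (existT _ n.+1 (ocons X' T)) (existT _ n X') (fun i => eta (incl i)).
Proof. by []. Qed.

Lemma square n (X' : Ob_ LM n) T m (D : Ob_ LM m) (a : 'I_n -> R 'I_m) :
  let f := @MkMor _ _ (existT _ m D) (existT _ n X') a in
  let X := existT _ n.+1 (ocons X' T) in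
  CCcomp (CCp X) (CCq f X) = CCcomp f (CCp (CCfstar f X)).
Proof.
move=> f X; rewrite /f /X fstar_eq q_eq. rewrite !p_cons !comp_eq; apply: mor_ext => i.
by rewrite bind_etaK /qarr unlift_incl.
Qed.

Lemma pullback n (X' : Ob_ LM n) T m (D : Ob_ LM m) (a : 'I_n -> R 'I_m) :
  let f := @MkMor _ _ (existT _ m D) (existT _ n X') a in
  let X := existT _ n.+1 (ocons X' T) in
  forall u v : Mor, mdom u = mdom v -> mcod u = X -> mcod v = mdom f ->
        CCcomp (CCp X) u = CCcomp f v ->
        exists! h, [/\ mdom h = mdom u, mcod h = CCfstar f X,
                       CCcomp (CCq f X) h = u & CCcomp (CCp (CCfstar f X)) h = v].
Proof.
move=> f X [e c ua] [e' c' va] E1 E2 E3; rewrite /f /X in E1 E2 E3 *.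
simpl in E1, E2, E3; subst e' c c'.
rewrite p_cons !comp_eq => /marr_inj H.
rewrite fstar_eq q_eq p_cons.
pose hh (i : 'I_m.+1) := match unlift ord_max i with Some j => va j | None => ua ord_max end.
exists (@MkMor _ _ e (existT _ m.+1 (ocons D (rho a T))) hh); split.
  split => //.
    rewrite comp_eq; apply: mor_ext => i; rewrite /qarr.
    case: unliftP => [j ->|->].
      rewrite -bind_bind.
      have -> : (fun y => bind hh (eta (incl y))) = va.
        by apply: functional_extensionality => y; rewrite bind_etaK /hh unlift_incl.
      move: (H j) => /=; rewrite bind_etaK -incl_lift => ->; done.
    by rewrite bind_etaK /hh unlift_none.
  rewrite comp_eq; apply: mor_ext => i; by rewrite bind_etaK /hh unlift_incl.
move=> [e2 c2 ha] [E1 E2 Eq Ep]; simpl in E1, E2; subst e2 c2.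
rewrite comp_eq in Eq; rewrite comp_eq in Ep.
have Eq' := marr_inj Eq; have Ep' := marr_inj Ep.
apply: mor_ext => i; rewrite /hh; case: unliftP => [j ->|->].
  by move: (Ep' j) => /=; rewrite bind_etaK -incl_lift => <-.
by move: (Eq' ord_max) => /=; rewrite /qarr unlift_none bind_etaK => <-.
Qed.


Lemma fstar_id n (X' : Ob_ LM n) T :
  CCfstar (CCid (existT _ n X')) (existT _ n.+1 (ocons X' T)) = existT _ n.+1 (ocons X' T).
Proof. by rewrite /CCid fstar_eq /= (rho_eta T). Qed.

Lemma q_id n (X' : Ob_ LM n) T :
  CCq (CCid (existT _ n X')) (existT _ n.+1 (ocons X' T)) = CCid (existT _ n.+1 (ocons X' T)).
Proof.
rewrite /CCid q_eq.
set t := rho _ T.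
have Et : t = T by rewrite /t; apply: rho_eta.
clearbody t; subst t.
apply: mor_ext => i; rewrite /qarr; case: unliftP => [j ->|->] //.
by rewrite bind_etaK incl_lift.
Qed.

Lemma fstar_comp n (X' : Ob_ LM n) T m (D : Ob_ LM m) (a : 'I_n -> R 'I_m) (e : Ob) (b : 'I_m -> R 'I_(CCl e)) :
  let f := @MkMor _ _ (existT _ m D) (existT _ n X') a in
  let g := @MkMor _ _ e (existT _ m D) b in
  let X := existT _ n.+1 (ocons X' T) in
  CCfstar (CCcomp f g) X = CCfstar g (CCfstar f X).
Proof.
move=> f g X; rewrite /f /g /X comp_eq !fstar_eq.
by rewrite (rho_rho a b T).
Qed.

Lemma q_comp n (X' : Ob_ LM n) T m (D : Ob_ LM m) (a : 'I_n -> R 'I_m) (e : Ob) (b : 'I_m -> R 'I_(CCl e)) :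
  let f := @MkMor _ _ (existT _ m D) (existT _ n X') a in
  let g := @MkMor _ _ e (existT _ m D) b in
  let X := existT _ n.+1 (ocons X' T) in
  CCq (CCcomp f g) X = CCcomp (CCq f X) (CCq g (CCfstar f X)).
Proof.
move=> f g X; rewrite /f /g /X comp_eq fstar_eq !q_eq comp_eq.
rewrite (rho_rho a b T).
apply: mor_ext => i; rewrite {1 3}/qarr; case: unliftP => [j _|_].
  rewrite -!bind_bind; congr bind; apply: functional_extensionality => y.
  by rewrite bind_etaK /qarr unlift_incl.
by rewrite bind_etaK /qarr unlift_none.
Qed.


End P.

Ltac redX := let n := fresh "n" in let X' := fresh "X'" in let T := fresh "T" in
  let d := fresh "d" in let c := fresh "c" in let a := fresh "a" in let E := fresh "E" in
  let m := fresh "m" in let D := fresh "D" in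
  move=> [d c a] /lpos [n [X' [T ->]]] E; simpl in E; subst c; case: d a => m D a.

Theorem proposition3p1 (R : monad) (LM : lmodule R) :
  is_Csystem (@mdom R LM) (@mcod R LM) (@CCid R LM) (@CCcomp R LM)
    (@CCl R LM) (@CCpt R LM) (@CCft R LM) (@CCp R LM)
    (@CCfstar R LM) (@CCq R LM).
Proof.
split.
- by [].
- by [].
- exact: dom_comp.
- exact: cod_comp.
- exact: id_left.
- exact: id_right.
- exact: assoc.
- exact: l0.
- by move=> X /lpos [n [X' [T ->]]].
- by [].
- exact: final.
- by case=> n [].
- by case=> n [].
- move=> X; redX; by rewrite fstar_eq.
- move=> X; redX; by rewrite fstar_eq.
- move=> X; redX; by rewrite q_eq fstar_eq.
- move=> X; redX; by rewrite q_eq.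
- move=> X; redX; exact: square.
- move=> X; redX; exact: pullback.
- by move=> X /lpos [n [X' [T ->]]]; exact: fstar_id.
- by move=> X /lpos [n [X' [T ->]]]; exact: q_id.
- move=> X f g H1 H2 H3; move: g H3; move: f H1 H2; redX; case=> e c b E; simpl in E; subst c; exact: fstar_comp.
- move=> X f g H1 H2 H3; move: g H3; move: f H1 H2; redX; case=> e c b E; simpl in E; subst c; exact: q_comp.
Qed.
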